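(* Fix a positive integer $n$, a nonzero $n$-partition $\lambda$ with $\lambda_n=0$, an $n$-semistandard tableau $T$ of shape $\lambda$, and $1\le h\le d+1$. Then for every location $(j,i)\ge(\beta_h,1)$ (in reading order) at which $\pi^{(j,i)}$ is defined, we have $\pi^{(j,i)}_{\zeta_{h-1}+1}<\dots<\pi^{(j,i)}_{\zeta_h}$.
   Context: Identify $\lambda=(\lambda_1,\dots,\lambda_n)$ (weakly decreasing nonnegative integers, $\lambda_n=0$, $\lambda\ne0$) with its Young diagram; $c_j$ is the length of column $j$. Let $\zeta_1<\dots<\zeta_d$ be the distinct column lengths, $\zeta_0:=0$, $\zeta_{d+1}:=n$; for $1\le h\le d$ let $\beta_h$ be the index of the rightmost column of length $\zeta_h$, and $\beta_{d+1}:=1$. Write $(j,i)$ for the box in column $j$, row $i$. Reading order: $(l,k)\le(j,i)$ iff $l<j$, or $l=j$ and $k\ge i$; convention $(j,c_j+1)$ means $(j-1,1)$. An $n$-semistandard tableau $T$ of shape $\lambda$ has entries in $[n]$, weakly increasing along rows, strictly increasing down columns; $T(j,i)$ is its entry, $C_j$ its $j$-th column. Permutations are in one-line form. Greedy procedure: $\pi^{(1,1)}$ has first $c_1$ entries those of $C_1$ increasing, followed by the rest of $[n]$ increasing. For $(j,i)$ with $j\ge2$ in reading order from $(2,c_2)$ to $(\lambda_1,1)$, define $\pi^{(j,i)}$ from $\pi:=\pi^{(j,i+1)}$: if $T(j-1,i)=T(j,i)$ set $\pi^{(j,i)}=\pi$; otherwise let $i_0=i$, and given $i_{x-1}$ with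 $\pi_{i_{x-1}}<T(j,i)$ let $i_x$ be the smallest index $>c_j$ with $\pi_{i_{x-1}}<\pi_{i_x}\le T(j,i)$, stopping at $i_m$ with $\pi_{i_m}=T(j,i)$; set $\pi^{(j,i)}_{i_x}=\pi_{i_{x-1}}$ ($1\le x\le m$), $\pi^{(j,i)}_{i_0}=\pi_{i_m}$, others unchanged. Thus $\pi^{(j,i)}$ is defined at $(1,1)$ and at all $(j,i)$ with $j\ge2$. *)

(* Defs.v *)
From mathcomp Require Import all_boot.
Set Implicit Arguments. Unset Strict Implicit. Unset Printing Implicit Defensive.

(* A partition lam = (lam_1,...,lam_n) is a seq nat of size n; lam_i = nth 0 lam (i-1).
   Columns and rows are 1-indexed; (j,i) = box in column j, row i. *)
Definition is_npartition (n : nat) (lam : seq nat) : Prop :=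
  [/\ size lam = n, sorted geq lam, nth 0 lam n.-1 = 0 & has (fun x => 0 < x) lam].

Definition lam1 (lam : seq nat) : nat := nth 0 lam 0.

Definition collen (lam : seq nat) (j : nat) : nat := count (fun x => j <= x) lam.

Definition in_diagram (lam : seq nat) (j i : nat) : bool :=
  [&& 1 <= j, j <= lam1 lam, 1 <= i & i <= collen lam j].

Definition semistandard (n : nat) (lam : seq nat) (T : nat -> nat -> nat) : Prop :=
  [/\ (forall j i, in_diagram lam j i -> 1 <= T j i <= n),
      (forall j i, in_diagram lam j i -> in_diagram lam j.+1 i -> T j i <= T j.+1 i) &
      (forall j i, in_diagram lam j i -> in_diagram lam j i.+1 -> T j i < T j i.+1)].

Definition zetas (lam : seq nat) : seq nat :=
  sort leq (undup [seq collen lam j | j <- iota 1 (lam1 lam)]).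
Definition dd (lam : seq nat) : nat := size (zetas lam).
Definition zeta (n : nat) (lam : seq nat) (h : nat) : nat :=
  if h == 0 then 0 else if h == (dd lam).+1 then n else nth 0 (zetas lam) h.-1.
Definition beta (n : nat) (lam : seq nat) (h : nat) : nat :=
  if h == (dd lam).+1 then 1
  else \max_(1 <= j < (lam1 lam).+1 | collen lam j == zeta n lam h) j.

(* permutations in one-line form: seq of length n; pi_k = nth 0 pi k.-1 *)
Definition pent (pi : seq nat) (k : nat) : nat := nth 0 pi k.-1.

Definition pi11 (n : nat) (lam : seq nat) (T : nat -> nat -> nat) : seq nat :=
  let C1 := [seq T 1 i | i <- iota 1 (collen lam 1)] in
  C1 ++ [seq x <- iota 1 n | x \notin C1].

(* the chain i_1, i_2, ..., i_m of the greedy step; fuel bounds its length *)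
Fixpoint chain (fuel : nat) (n c t : nat) (pi : seq nat) (v : nat) : seq nat :=
  match fuel with
  | 0 => [::]
  | f.+1 =>
    if v == t then [::] else
    match ohead [seq k <- iota c.+1 (n - c) | (v < pent pi k) && (pent pi k <= t)] with
    | None => [::]
    | Some k => k :: chain f n c t pi (pent pi k)
    end
  end.

(* pi^{(j,i)} from pi = pi^{(j,i+1)} *)
Definition step (n : nat) (lam : seq nat) (T : nat -> nat -> nat)
    (pi : seq nat) (ji : nat * nat) : seq nat :=
  let (j, i) := ji in
  let t := T j i in
  if T j.-1 i == t then pi else
  let ch := chain n n (collen lam j) t pi (pent pi i) in
  let idx := i :: ch in
  mkseq (fun p0 => let p := p0.+1 in
           if p \in ch then pent pi (nth 0 idx (index p ch))
           else if p == i then pent pi (last i ch)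
           else pent pi p) n.

Definition locs (lam : seq nat) : seq (nat * nat) :=
  flatten [seq [seq (j, i) | i <- rev (iota 1 (collen lam j))]
          | j <- iota 2 (lam1 lam).-1].

(* pi^{(j,i)} (meaningful at (1,1) and at boxes (j,i) with j >= 2) *)
Definition pi_at (n : nat) (lam : seq nat) (T : nat -> nat -> nat) (j i : nat) : seq nat :=
  if (j, i) == (1, 1) then pi11 n lam T
  else foldl (step n lam T) (pi11 n lam T) (take (index (j, i) (locs lam)).+1 (locs lam)).

Definition pi_defined (lam : seq nat) (j i : nat) : bool :=
  ((j, i) == (1, 1)) || ((2 <= j) && in_diagram lam j i).

Definition read_le (lk ji : nat * nat) : bool :=
  (lk.1 < ji.1) || ((lk.1 == ji.1) && (ji.2 <= lk.2)).

(* Main.v *)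
Require Import Defs.
From mathcomp Require Import all_boot zify.
Set Implicit Arguments. Unset Strict Implicit. Unset Printing Implicit Defensive.

Lemma ohead_filter_iota (P : pred nat) m l :
  match ohead [seq k <- iota m l | P k] with
  | Some k => [/\ P k, m <= k, k < m + l & forall k', m <= k' < k -> ~~ P k']
  | None => forall k', m <= k' < m + l -> ~~ P k' end.
Proof.
elim: l m => [|l IH] m /=.
  by move=> k' H; exfalso; lia.
case: ifP => Pm /=.
  by split => //; [lia| move=> k' H; lia].
have := IH m.+1; case: (ohead _) => [k [H1 H2 H3 H4]|H].
  split => //; [lia|lia|] => k' Hk'.
  have [->|ne] := eqVneq k' m; first by rewrite Pm.
  apply: H4; lia.
move=> k' Hk'; have [->|ne] := eqVneq k' m; first by rewrite Pm.
apply: H; lia.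
Qed.

Lemma chain_range f n c t pi v k : k \in chain f n c t pi v -> c < k <= n.
Proof.
elim: f v => [|f IH] v //=.
case: eqP => // _.
have := ohead_filter_iota (fun k => (v < pent pi k) && (pent pi k <= t)) c.+1 (n - c).
case: (ohead _) => [k0 [_ H2 H3 _]|_] //.
rewrite inE => /orP[/eqP->|/IH//]; lia.
Qed.

Lemma chain_path f n c t pi v :
  path ltn v (map (pent pi) (chain f n c t pi v)) /\
  all (fun k => pent pi k <= t) (chain f n c t pi v).
Proof.
elim: f v => [|f IH] v //=.
case: eqP => // _.
have := ohead_filter_iota (fun k => (v < pent pi k) && (pent pi k <= t)) c.+1 (n - c).
case: (ohead _) => [k0 [/andP[H1 H1'] H2 H3 _]|_] //=.
by case: (IH (pent pi k0)) => -> ->; rewrite H1 H1'.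
Qed.

Lemma chain_min f n c t pi v x :
  x < size (chain f n c t pi v) ->
  forall k', c < k' < nth 0 (chain f n c t pi v) x ->
    ~~ ((nth 0 (v :: map (pent pi) (chain f n c t pi v)) x < pent pi k') && (pent pi k' <= t)).
Proof.
elim: f v x => [|f IH] v x //=.
case: eqP => // _.
have := ohead_filter_iota (fun k => (v < pent pi k) && (pent pi k <= t)) c.+1 (n - c).
case: (ohead _) => [k0 [_ H2 H3 H4]|_] //=.
case: x => [|x] /= Hx k' Hk'.
  by apply: H4; lia.
exact: IH.
Qed.

Lemma chain_term f n c t pi v :
  v < t -> t - v < f -> (exists q, [/\ c < q, q <= n & pent pi q = t]) ->
  chain f n c t pi v != [::] /\ pent pi (last 0 (chain f n c t pi v)) = t.
Proof.
elim: f v => [|f IH] v // Hvt Hf [q [Hq1 Hq2 Hq3]] /=.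
rewrite (ltn_eqF Hvt).
have := ohead_filter_iota (fun k => (v < pent pi k) && (pent pi k <= t)) c.+1 (n - c).
case: (ohead _) => [k0 [/andP[H1 H1'] H2 H3 _]|H] /=.
  split => //.
  have [E|ne] := eqVneq (pent pi k0) t.
    by rewrite /=; case: f {IH Hf} => [|f] /=; rewrite ?E ?eqxx.
  have Hlt : pent pi k0 < t by rewrite ltn_neqAle ne.
  have [Hn Hl] := IH (pent pi k0) Hlt ltac:(lia) (ex_intro _ q (And3 Hq1 Hq2 Hq3)).
  move: Hn Hl; case: (chain _ _ _ _ _ _) => //.
exfalso; move: (H q ltac:(lia)); rewrite Hq3 Hvt leqnn //.
Qed.
Definition sig (i : nat) (ch : seq nat) (p : nat) :=
  if p \in ch then nth 0 (i :: ch) (index p ch) else if p == i then last i ch else p.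

Lemma step_eq n lam T pi j i : T j.-1 i != T j i ->
  step n lam T pi (j,i) =
  mkseq (fun p0 => pent pi (sig i (chain n n (collen lam j) (T j i) pi (pent pi i)) p0.+1)) n.
Proof.
move=> H; rewrite /step (negbTE H); apply: eq_mkseq => p /=.
by rewrite /sig; case: ifP => //; case: ifP.
Qed.

Lemma step_same n lam T pi j i : T j.-1 i = T j i -> step n lam T pi (j,i) = pi.
Proof. by move=> H; rewrite /step H eqxx. Qed.

Lemma pent_mkseq f n p : 1 <= p <= n -> pent (mkseq f n) p = f p.-1.
Proof. by move=> H; rewrite /pent nth_mkseq //; lia. Qed.

Lemma map_pent s n : size s = n -> map (pent s) (iota 1 n) = s.
Proof.
move=> <-; rewrite -(addn0 1) iotaDl -map_comp.
rewrite -[RHS](mkseq_nth 0); apply: eq_map => x /=; by rewrite /pent.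
Qed.

Lemma mkseq_map (A : Type) (f : nat -> A) n : mkseq (fun p0 => f p0.+1) n = map f (iota 1 n).
Proof. by rewrite /mkseq -(addn0 1) iotaDl -map_comp. Qed.

Lemma sig_idx i ch p : uniq (i :: ch) -> p \in i :: ch ->
  sig i ch p = nth 0 (i :: ch) (if index p (i :: ch) is y.+1 then y else size ch).
Proof.
move=> /= /andP[ni _]; rewrite inE /sig /= => /orP[/eqP->|pch].
  rewrite (negbTE ni) eqxx.
  by rewrite -[size ch]/((size (i :: ch)).-1) nth_last.
case: ifP => [_|/negP //]; case: eqP => // E; by move: ni; rewrite E pch.
Qed.

Lemma r_lt (ch : seq nat) y : y < (size ch).+1 -> (if y is y'.+1 then y' else size ch) < (size ch).+1.
Proof. by case: y => [|y] /=; lia. Qed.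

Lemma sig_perm n i ch : 1 <= i -> i <= n -> (forall k, k \in ch -> i < k <= n) ->
  uniq ch -> perm_eq (map (sig i ch) (iota 1 n)) (iota 1 n).
Proof.
move=> H1 H2 Hch Uch.
have ni : i \notin ch by apply/negP => /Hch; lia.
have Ui : uniq (i :: ch) by rewrite /= ni Uch.
have inI p : p \in i :: ch -> sig i ch p \in i :: ch.
  move=> pin; rewrite sig_idx //; apply: mem_nth.
  by apply: r_lt; rewrite -[(size ch).+1]/(size (i :: ch)) index_mem.
have outI p : p \notin i :: ch -> sig i ch p = p.
  by rewrite inE negb_or /sig => /andP[/negbTE -> /negbTE ->].
have inj : {in iota 1 n &, injective (sig i ch)}.
  move=> p q _ _.
  have [pin|pout] := boolP (p \in i :: ch); have [qin|qout] := boolP (q \in i :: ch).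
  - rewrite !sig_idx // => /eqP; rewrite nth_uniq //; last first.
      by apply: r_lt; rewrite -[(size ch).+1]/(size (i :: ch)) index_mem.
      by apply: r_lt; rewrite -[(size ch).+1]/(size (i :: ch)) index_mem.
    move: (index_mem p (i :: ch)) (index_mem q (i :: ch)); rewrite pin qin.
    case Ep: (index p (i :: ch)) => [|y]; case Eq: (index q (i :: ch)) => [|y'] /= Hp Hq /eqP E;
      try lia.
    + by rewrite -(nth_index 0 pin) -(nth_index 0 qin) Ep Eq.
    + by rewrite -(nth_index 0 pin) -(nth_index 0 qin) Ep Eq E.
  - by rewrite (outI q qout) => E; move: qout; rewrite -E inI.
  - by rewrite (outI p pout) => E; move: pout; rewrite E inI.
  - by rewrite (outI p pout) (outI q qout).
have sub : {subset map (sig i ch) (iota 1 n) <= iota 1 n}.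
  move=> y /mapP[p]; rewrite mem_iota => Hp ->.
  have [pin|pout] := boolP (p \in i :: ch); last by rewrite outI // mem_iota.
  move: (inI p pin); rewrite inE mem_iota => /orP[/eqP->|/Hch]; lia.
have Um : uniq (map (sig i ch) (iota 1 n)) by rewrite map_inj_in_uniq // iota_uniq.
apply: uniq_perm => //; first exact: iota_uniq.
by have [] := uniq_min_size Um sub; rewrite ?size_map.
Qed.

Lemma chain_uniq f n c t pi v : uniq (chain f n c t pi v).
Proof.
have [P _] := chain_path f n c t pi v.
have : uniq (map (pent pi) (chain f n c t pi v)).
  by apply: (sorted_uniq ltn_trans ltnn); apply: path_sorted P.
by move/map_uniq.
Qed.

Lemma step_perm n lam T pi j i : 1 <= i <= collen lam j -> collen lam j <= n ->
  perm_eq pi (iota 1 n) -> perm_eq (step n lam T pi (j, i)) (iota 1 n).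
Proof.
move=> Hi Hc Hp; have Hs := perm_size Hp.
have [E|ne] := eqVneq (T j.-1 i) (T j i); first by rewrite step_same.
rewrite step_eq //; set ch := chain _ _ _ _ _ _; rewrite (@mkseq_map nat (fun p => pent pi (sig i ch p))).
apply: perm_trans Hp.
have -> : [seq pent pi (sig i ch p) | p <- iota 1 n] = map (pent pi) (map (sig i ch) (iota 1 n)).
  by rewrite -map_comp.
rewrite -[X in perm_eq _ X](@map_pent pi n); last by rewrite Hs size_iota.
apply: perm_map; apply: sig_perm; try lia.
  move=> k /chain_range; lia.
exact: chain_uniq.
Qed.

Definition mono (lo hi : nat) (pi : seq nat) :=
  forall k, lo + 1 <= k -> k < hi -> pent pi k < pent pi k.+1.

Lemma pent_step n lam T pi j i p : T j.-1 i != T j i -> 1 <= p <= n ->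
  pent (step n lam T pi (j, i)) p =
  pent pi (sig i (chain n n (collen lam j) (T j i) pi (pent pi i)) p).
Proof. by move=> ne Hp; rewrite step_eq // pent_mkseq // prednK //; lia. Qed.

Lemma pent_inj n pi p q : perm_eq pi (iota 1 n) -> 1 <= p <= n -> 1 <= q <= n ->
  pent pi p = pent pi q -> p = q.
Proof.
move=> Hp Hpp Hqq E.
have Hs : size pi = n by rewrite (perm_size Hp) size_iota.
have U : uniq pi by rewrite (perm_uniq Hp) iota_uniq.
by move: E; rewrite /pent => /eqP; rewrite nth_uniq ?Hs //; lia.
Qed.

Lemma step_mono n lam T pi j i lo hi :
  1 <= i <= collen lam j -> collen lam j <= lo -> hi <= n ->
  perm_eq pi (iota 1 n) -> mono lo hi pi -> mono lo hi (step n lam T pi (j, i)).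
Proof.
move=> Hi Hc Hhi Hp Hm.
have [E|ne] := eqVneq (T j.-1 i) (T j i); first by rewrite step_same.
move=> k Hk1 Hk2.
rewrite !pent_step //; try lia.
set ch := chain _ _ _ _ _ _.
have [Pch Ach] := chain_path n n (collen lam j) (T j i) pi (pent pi i).
rewrite -/ch in Pch Ach.
have Rch : forall k, k \in ch -> collen lam j < k <= n by move=> k'; apply: chain_range.
set U := pent pi i :: map (pent pi) ch.
have SU : sorted ltn U by [].
have sU : size U = (size ch).+1 by rewrite /= size_map.
have NU x : x < (size ch).+1 -> nth 0 U x = pent pi (nth 0 (i :: ch) x).
  by move=> Hx; rewrite /U -(map_cons (pent pi)) (nth_map 0).
have Hki : k != i by apply/eqP; lia.
have Hk1i : k.+1 != i by apply/eqP; lia.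
have sigE p : p != i -> sig i ch p = if p \in ch then nth 0 (i :: ch) (index p ch) else p.
  by rewrite /sig => /negbTE ->; case: ifP.
rewrite !sigE //.
have lt_U x y : x < y -> y < (size ch).+1 -> nth 0 U x < nth 0 U y.
  by move=> Hxy Hy; apply: (sorted_ltn_nth ltn_trans) => //; rewrite inE sU //; lia.
have Hmk := Hm k Hk1 Hk2.
case: ifP => kin; case: ifP => k1in.
- have Hx : index k ch < size ch by rewrite index_mem.
  have Hy : index k.+1 ch < size ch by rewrite index_mem.
  rewrite -!NU; try lia.
  have Ex : nth 0 U (index k ch).+1 = pent pi k by rewrite NU /= ?nth_index //; lia.
  have Ey : nth 0 U (index k.+1 ch).+1 = pent pi k.+1 by rewrite NU /= ?nth_index //; lia.
  suff Hxy : index k ch < index k.+1 ch by apply: (lt_U _ _ Hxy); lia.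
  case: (ltngtP (index k ch) (index k.+1 ch)) => // H.
    have := lt_U (index k.+1 ch).+1 (index k ch).+1 ltac:(lia) ltac:(lia).
    rewrite Ex Ey; lia.
  have E1 := nth_index 0 kin; have E2 := nth_index 0 k1in.
  by rewrite H E2 in E1; lia.
- have Hx : index k ch < size ch by rewrite index_mem.
  rewrite -NU; last lia.
  have Ek : nth 0 U (index k ch).+1 = pent pi k by rewrite NU /= ?nth_index //; lia.
  have := lt_U (index k ch) (index k ch).+1 ltac:(lia) ltac:(lia).
  rewrite Ek NU; lia.
- have Hy : index k.+1 ch < size ch by rewrite index_mem.
  have Hmin := @chain_min n n (collen lam j) (T j i) pi (pent pi i) (index k.+1 ch) Hy k ltac:(rewrite nth_index //; lia).
  rewrite -/ch -/U in Hmin.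
  have Ht : pent pi k.+1 <= T j i by move/allP: Ach => /(_ _ k1in).
  rewrite -NU; last lia.
  have Hle : pent pi k <= nth 0 U (index k.+1 ch).
    by move: Hmin; rewrite negb_and -leqNgt => /orP[//|]; lia.
  rewrite ltn_neqAle Hle andbT; apply/eqP => E.
  rewrite NU in E; last lia.
  have Hm2 : nth 0 (i :: ch) (index k.+1 ch) \in i :: ch by apply: mem_nth => /=; lia.
  have Hm3 : 1 <= nth 0 (i :: ch) (index k.+1 ch) <= n.
    by move: Hm2; rewrite inE => /orP[/eqP->|/Rch]; lia.
  have Ek := @pent_inj n pi k _ Hp ltac:(lia) Hm3 E.
  by move: Hm2; rewrite -Ek inE (negbTE Hki) kin.
- exact: Hmk.
Qed.

Lemma step_row n lam T pi j i :
  1 <= i <= collen lam j -> collen lam j <= n ->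
  T j.-1 i <= T j i -> 1 <= T j.-1 i -> T j i <= n ->
  (forall k, 1 <= k < i -> T j.-1 k < T j i) ->
  (forall k, i < k <= collen lam j -> T j i < T j k) ->
  perm_eq pi (iota 1 n) ->
  (forall k, 1 <= k <= collen lam j -> pent pi k = if i < k then T j k else T j.-1 k) ->
  forall k, 1 <= k <= collen lam j ->
    pent (step n lam T pi (j,i)) k = if i <= k then T j k else T j.-1 k.
Proof.
move=> Hi Hc Hr H1 Hn Hlow Hup Hp Hinv k Hk.
have [E|ne] := eqVneq (T j.-1 i) (T j i).
  rewrite step_same // Hinv //.
  have [->|nki] := eqVneq k i; first by rewrite ltnn leqnn E.
  have nik : (i == k) = false by rewrite eq_sym (negbTE nki).
  by rewrite [i <= k]leq_eqVlt nik.
rewrite pent_step //; last lia.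
set c := collen lam j in Hi Hc Hup Hinv Hk *.
set t := T j i in Hr Hn Hlow Hup ne *.
set ch := chain _ _ _ _ _ _.
have Rch : forall k, k \in ch -> c < k <= n by move=> k'; apply: chain_range.
have Hs : size pi = n by rewrite (perm_size Hp) size_iota.
have Hv : pent pi i = T j.-1 i by rewrite Hinv ?ltnn //; lia.
have Hvt : T j.-1 i < t by rewrite ltn_neqAle ne Hr.
have tin : t \in pi by rewrite (perm_mem Hp) mem_iota; lia.
have Hq : exists q, [/\ c < q, q <= n & pent pi q = t].
  exists (index t pi).+1; rewrite /pent /= nth_index //.
  have := index_mem t pi; rewrite tin Hs => Hlt.
  split => //; rewrite ltnNge; apply/negP => Hq.
  have := Hinv (index t pi).+1 ltac:(lia); rewrite /pent /= nth_index // => Et.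
  move: Et; case: ltngtP => H Et.
  - have := Hup (index t pi).+1 ltac:(lia); lia.
  - have := Hlow (index t pi).+1 ltac:(lia); lia.
  - by move: ne; rewrite Et H eqxx.
have [Hne Hlast] := @chain_term n n c t pi (pent pi i) ltac:(lia) ltac:(lia) Hq.
rewrite -/ch in Hne Hlast.
have kch : (k \in ch) = false by apply/negP => /Rch; lia.
rewrite /sig kch.
have [->|nki] := eqVneq k i.
  rewrite leqnn; have -> : last i ch = last 0 ch by case: (ch) Hne.
  by rewrite Hlast.
rewrite Hinv //.
have nik : (i == k) = false by rewrite eq_sym (negbTE nki).
by rewrite [i <= k]leq_eqVlt nik.
Qed.

Lemma part_le n lam x : is_npartition n lam -> x \in lam -> x <= lam1 lam.
Proof.
case=> _ Hs _ _; rewrite /lam1; case: lam Hs => [|a s] //= Hs.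
rewrite inE => /orP[/eqP->//|xs].
have tr : transitive geq by move=> p q r H1 H2; exact: leq_trans H2 H1.
by have /allP /(_ x xs) := order_path_min tr Hs.
Qed.

Lemma collen_le_n n lam j : is_npartition n lam -> collen lam j <= n.
Proof. by case=> Hs _ _ _; rewrite /collen -Hs count_size. Qed.

Lemma collen_anti lam j j' : j <= j' -> collen lam j' <= collen lam j.
Proof. move=> H; apply: sub_count => x /= Hx; exact: leq_trans H Hx. Qed.

Lemma lam1_pos n lam : is_npartition n lam -> 0 < lam1 lam.
Proof.
move=> P; case: (P) => _ _ _ /hasP [x xin /= x0].
exact: leq_trans x0 (part_le P xin).
Qed.

Lemma collen_pos n lam j : is_npartition n lam -> j <= lam1 lam -> 0 < collen lam j.
Proof.
move=> P Hj; rewrite /collen -has_count; apply/hasP; exists (lam1 lam) => //.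
rewrite /lam1; case: (P) => _ _ _; case: (lam) => //= a s _.
by rewrite inE eqxx.
Qed.

Lemma diag_col_lt n lam T j k i : semistandard n lam T ->
  in_diagram lam j i -> 1 <= k -> k < i -> T j k < T j i.
Proof.
case=> _ _ Hc Hd Hk Hki.
elim: i Hd Hki => [|i IH] // Hd Hki.
move: (Hd); rewrite /in_diagram => /and4P[H1 H2 H3 H4].
have Hd' : in_diagram lam j i by rewrite /in_diagram H1 H2 /=; apply/andP; split; lia.
have := Hc j i Hd' Hd.
have [->|ne] := eqVneq k i; first by [].
move=> H; apply: ltn_trans H; apply: IH => //; lia.
Qed.

Lemma diag_prev lam j i : 2 <= j -> in_diagram lam j i -> in_diagram lam j.-1 i.
Proof.
move=> Hj; rewrite /in_diagram => /and4P[H1 H2 H3 H4].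
have := @collen_anti lam j.-1 j ltac:(lia).
move=> Hc; rewrite /in_diagram; apply/and4P; split; lia.
Qed.

Lemma diag_row n lam T j i : semistandard n lam T -> 2 <= j -> in_diagram lam j i ->
  T j.-1 i <= T j i.
Proof.
case=> _ Hr _ Hj Hd.
have := Hr j.-1 i (diag_prev Hj Hd); rewrite prednK; last lia.
by move=> /(_ Hd).
Qed.

Definition C1 lam (T : nat -> nat -> nat) := [seq T 1 i | i <- iota 1 (collen lam 1)].

Lemma pi11_props n lam T : is_npartition n lam -> semistandard n lam T ->
  [/\ perm_eq (pi11 n lam T) (iota 1 n),
      (forall k, 1 <= k <= collen lam 1 -> pent (pi11 n lam T) k = T 1 k) &
      mono (collen lam 1) n (pi11 n lam T)].
Proof.
move=> P S.
have L1 := lam1_pos P.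
have Hc1 : (collen lam 1) <= n := collen_le_n 1 P.
have Dk k : 1 <= k <= (collen lam 1) -> in_diagram lam 1 k.
  by move=> Hk; rewrite /in_diagram; apply/and4P; split => //; lia.
have UC : uniq (C1 lam T).
  rewrite /C1 map_inj_in_uniq ?iota_uniq // => a b; rewrite !mem_iota => Ha Hb E.
  case: (ltngtP a b) => // H.
    by have := @diag_col_lt n lam T 1 a b S (Dk b ltac:(lia)) ltac:(lia) H; rewrite E ltnn.
  by have := @diag_col_lt n lam T 1 b a S (Dk a ltac:(lia)) ltac:(lia) H; rewrite E ltnn.
have SC : {subset C1 lam T <= iota 1 n}.
  move=> x /mapP[a]; rewrite mem_iota => Ha ->.
  case: S => Hr _ _; have := Hr 1 a (Dk a ltac:(lia)); rewrite mem_iota; lia.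
set R := [seq x <- iota 1 n | x \notin C1 lam T].
have E11 : pi11 n lam T = C1 lam T ++ R by [].
have Hperm : perm_eq (pi11 n lam T) (iota 1 n).
  rewrite E11; apply: uniq_perm; last first.
  - move=> x; rewrite mem_cat mem_filter; apply/idP/idP.
      by case/orP => [/SC|/andP[]].
    by move=> xi; case: (boolP (x \in C1 lam T)) => //= ->.
  - exact: iota_uniq.
  rewrite cat_uniq UC filter_uniq ?iota_uniq // andbT.
  by apply/hasPn => x; rewrite mem_filter => /andP[].
have sC : size (C1 lam T) = (collen lam 1) by rewrite size_map size_iota.
have sR : size R = n - (collen lam 1).
  by have := perm_size Hperm; rewrite E11 size_cat sC size_iota; lia.
split => //.
  move=> k Hk; rewrite E11 /pent nth_cat sC ifT; last lia.
  by rewrite /C1 (nth_map 0) ?size_iota ?nth_iota; try lia; congr T; lia.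
move=> k Hk1 Hk2; rewrite E11 /pent !nth_cat sC !ifF; try lia.
have SR : sorted ltn R by apply: sorted_filter; [exact: ltn_trans|exact: iota_ltn_sorted].
apply: (sorted_ltn_nth ltn_trans) => //; rewrite ?inE ?sR; lia.
Qed.

Definition col (lam : seq nat) (j : nat) : seq (nat * nat) :=
  [seq (j, i) | i <- rev (iota 1 (collen lam j))].

Definition stc n lam T (j : nat) : seq nat :=
  foldl (fun pi j' => foldl (step n lam T) pi (col lam j')) (pi11 n lam T) (iota 2 j.-1).

Lemma foldl_flatten (A B C : Type) (f : A -> B -> A) (g : C -> seq B) x s :
  foldl f x (flatten (map g s)) = foldl (fun x a => foldl f x (g a)) x s.
Proof. by elim: s x => [|a s IH] x //=; rewrite foldl_cat IH. Qed.

Lemma stc1 n lam T : stc n lam T 1 = pi11 n lam T.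
Proof. by []. Qed.

Lemma stcS n lam T j : 1 <= j ->
  stc n lam T j.+1 = foldl (step n lam T) (stc n lam T j) (col lam j.+1).
Proof.
move=> Hj; rewrite /stc /=.
have -> : iota 2 j = iota 2 j.-1 ++ [:: j.+1].
  have -> : iota 2 j = iota 2 (j.-1 + 1) by rewrite addn1 prednK.
  by rewrite iotaD /=; congr (_ ++ [:: _]); lia.
by rewrite foldl_cat.
Qed.

Lemma size_col lam j : size (col lam j) = collen lam j.
Proof. by rewrite size_map size_rev size_iota. Qed.

Lemma nth_col lam j m : m < collen lam j -> nth (0,0) (col lam j) m = (j, collen lam j - m).
Proof.
move=> Hm; rewrite /col (nth_map 0) ?size_rev ?size_iota // nth_rev ?size_iota //.
rewrite nth_iota; first by congr pair; lia.
lia.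
Qed.

Lemma mem_col lam j x : x \in col lam j -> x.1 = j /\ 1 <= x.2 <= collen lam j.
Proof. by move=> /mapP[i]; rewrite mem_rev mem_iota => Hi ->; split => //; lia. Qed.

Lemma index_col lam j i : 1 <= i <= collen lam j -> index (j, i) (col lam j) = collen lam j - i.
Proof.
move=> Hi.
have Hm : collen lam j - i < collen lam j by lia.
have := nth_col Hm; rewrite (_ : collen lam j - (collen lam j - i) = i); last lia.
move=> <-; rewrite index_uniq // ?size_col //.
rewrite /col map_inj_uniq ?rev_uniq ?iota_uniq //.
by move=> a b [].
Qed.

Lemma pi_at_col n lam T j i : 2 <= j <= lam1 lam -> 1 <= i <= collen lam j ->
  pi_at n lam T j i = foldl (step n lam T) (stc n lam T j.-1) (take (collen lam j - i).+1 (col lam j)).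
Proof.
move=> Hj Hi.
rewrite /pi_at ifF; last by apply/eqP => -[]; lia.
have Hsplit : iota 2 (lam1 lam).-1 = iota 2 (j.-1.-1) ++ j :: iota j.+1 (lam1 lam - j).
  have -> : (lam1 lam).-1 = j.-1.-1 + (lam1 lam - j).+1 by lia.
  by rewrite iotaD /= (_ : 2 + j.-2 = j) //; lia.
rewrite /locs Hsplit map_cat flatten_cat /=.
set A := flatten _.
have nA : (j, i) \notin A.
  apply/negP => /flattenP [s /mapP [j' Hj' ->] /mem_col [/= E _]].
  by move: Hj'; rewrite mem_iota E; lia.
rewrite index_cat (negbTE nA) index_cat.
have inC : (j, i) \in col lam j.
  by rewrite /col; apply: map_f; rewrite mem_rev mem_iota; lia.
rewrite inC index_col // -addnS take_cat ifF; last by rewrite ltnNge leq_addr.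
rewrite (_ : size A + (collen lam j - i).+1 - size A = (collen lam j - i).+1); last lia.
rewrite -/(col lam j) takel_cat ?size_col; last lia.
rewrite foldl_cat /A foldl_flatten.
by [].
Qed.

Lemma diag_intro lam j k : 1 <= j <= lam1 lam -> 1 <= k <= collen lam j -> in_diagram lam j k.
Proof. by move=> Hj Hk; rewrite /in_diagram; apply/and4P; split; lia. Qed.

Lemma col_run n lam T j pi : is_npartition n lam -> semistandard n lam T ->
  2 <= j <= lam1 lam -> perm_eq pi (iota 1 n) ->
  (forall k, 1 <= k <= collen lam j -> pent pi k = T j.-1 k) ->
  forall m, m <= collen lam j ->
  perm_eq (foldl (step n lam T) pi (take m (col lam j))) (iota 1 n) /\
  (forall k, 1 <= k <= collen lam j ->
    pent (foldl (step n lam T) pi (take m (col lam j))) k =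
    if collen lam j - m < k then T j k else T j.-1 k).
Proof.
move=> P S Hj Hp Hinv.
have Hc := collen_le_n j P.
have Sr : forall j' i', in_diagram lam j' i' -> 1 <= T j' i' <= n by case: S.
elim=> [|m IH] Hm.
  rewrite take0 /=; split => // k Hk; rewrite Hinv // ifF //; apply/negbTE/negP; lia.
have [Hp' Hinv'] := IH (ltnW Hm).
rewrite (take_nth (0,0)) ?size_col // foldl_rcons nth_col //.
set i := collen lam j - m.
have Di : in_diagram lam j i by apply: diag_intro; lia.
have Hrow := diag_row S (ltac:(lia) : 2 <= j) Di.
have R1 := Sr _ _ (diag_prev (ltac:(lia) : 2 <= j) Di).
have R2 := Sr _ _ Di.
split; first by apply: step_perm => //; lia.
have Hstep := @step_row n lam T _ j i ltac:(lia) Hc Hrow ltac:(lia) ltac:(lia).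
move=> k Hk; rewrite Hstep //.
- by rewrite (_ : (collen lam j - m.+1 < k) = (i <= k)) //; apply/idP/idP; lia.
- move=> k' Hk'.
  have Dk' : in_diagram lam j k' by apply: diag_intro; lia.
  have := diag_row S (ltac:(lia) : 2 <= j) Dk'.
  have := @diag_col_lt n lam T j k' i S Di ltac:(lia) ltac:(lia); lia.
- move=> k' Hk'.
  exact: (@diag_col_lt n lam T j i k' S (@diag_intro lam j k' ltac:(lia) ltac:(lia)) ltac:(lia) ltac:(lia)).
Qed.

Lemma stc_inv n lam T j : is_npartition n lam -> semistandard n lam T ->
  1 <= j <= lam1 lam ->
  perm_eq (stc n lam T j) (iota 1 n) /\
  (forall k, 1 <= k <= collen lam j -> pent (stc n lam T j) k = T j k).
Proof.
move=> P S; elim: j => [|j IH] // Hj.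
have [->|Hj1] := eqVneq j 0.
  by rewrite stc1; case: (pi11_props P S).
have [Hp Hinv] := IH ltac:(lia).
rewrite stcS; last lia.
have Hc : collen lam j.+1 <= collen lam j by apply: collen_anti.
have [H1 H2] := @col_run n lam T j.+1 _ P S ltac:(lia) Hp
   (fun k Hk => Hinv k ltac:(lia)) (collen lam j.+1) (leqnn _).
rewrite take_oversize ?size_col // in H1 H2.
split => // k Hk; rewrite H2 // ifT //; lia.
Qed.

Lemma foldl_pres n lam T lo hi s pi :
  hi <= n -> (forall x, x \in s -> 1 <= x.2 <= collen lam x.1 /\ collen lam x.1 <= lo) ->
  lo <= n ->
  perm_eq pi (iota 1 n) -> mono lo hi pi ->
  perm_eq (foldl (step n lam T) pi s) (iota 1 n) /\ mono lo hi (foldl (step n lam T) pi s).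
Proof.
move=> Hhi Hs Hlo; elim: s pi Hs => [|[j' i'] s IH] pi Hs Hp Hm //=.
have [Hx1 Hx2] := Hs (j', i') (mem_head _ _); simpl in Hx1, Hx2.
apply: IH.
- by move=> x xs; apply: Hs; rewrite inE xs orbT.
- apply: step_perm => //; lia.
- exact: step_mono.
Qed.

Lemma zetas_sorted lam : sorted ltn (zetas lam).
Proof.
rewrite ltn_sorted_uniq_leq sort_uniq undup_uniq /=.
apply: sort_sorted; exact: leq_total.
Qed.

Lemma mem_zetas lam j : 1 <= j <= lam1 lam -> collen lam j \in zetas lam.
Proof. by move=> Hj; rewrite mem_sort mem_undup; apply: map_f; rewrite mem_iota; lia. Qed.

Lemma zetas_mem lam x : x \in zetas lam -> exists j, 1 <= j <= lam1 lam /\ collen lam j = x.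
Proof.
rewrite mem_sort mem_undup => /mapP [j]; rewrite mem_iota => Hj ->.
by exists j; split => //; lia.
Qed.

Lemma zetas_le_n n lam x : is_npartition n lam -> x \in zetas lam -> x <= n.
Proof. by move=> P /zetas_mem [j [_ <-]]; apply: collen_le_n P. Qed.

Lemma zetas_mono lam a b : a <= b -> b < size (zetas lam) ->
  nth 0 (zetas lam) a <= nth 0 (zetas lam) b.
Proof.
move=> Hab Hb.
have S : sorted leq (zetas lam).
  by apply: (sub_sorted _ (zetas_sorted lam)) => p q; apply: ltnW.
apply: (sorted_leq_nth leq_trans leqnn) => //; rewrite inE; lia.
Qed.

Lemma zetas_index lam x y : x \in zetas lam -> y < size (zetas lam) ->
  x < nth 0 (zetas lam) y -> index x (zetas lam) < y.
Proof.
move=> xin Hy Hx; rewrite ltnNge; apply/negP => H.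
have := @zetas_mono lam y (index x (zetas lam)) H ltac:(rewrite index_mem //).
rewrite nth_index //; lia.
Qed.

Lemma zeta_eq n lam h : 1 <= h <= dd lam -> zeta n lam h = nth 0 (zetas lam) h.-1.
Proof.
move=> Hh; rewrite /zeta ifF; last by apply/negbTE/negP; lia.
by rewrite ifF //; apply/negbTE/negP; lia.
Qed.

Lemma bigmax_nat (P : pred nat) N :
  \max_(1 <= j < N.+1 | P j) j <= N /\
  (\max_(1 <= j < N.+1 | P j) j = 0 \/
     (1 <= \max_(1 <= j < N.+1 | P j) j /\ P (\max_(1 <= j < N.+1 | P j) j))) /\
  (forall j, \max_(1 <= j < N.+1 | P j) j < j <= N -> ~~ P j).
Proof.
elim: N => [|N IH].
  rewrite big_geq //; split => //; split; first by left.
  move=> j; lia.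
rewrite big_mkcond big_nat_recr //= -big_mkcond.
set M := \max_(1 <= j < N.+1 | P j) j in IH *.
case: IH => [HM [HM2 HM3]].
case: ifP => PN.
  rewrite (_ : maxn M N.+1 = N.+1); last by apply/maxn_idPr; lia.
  split => //; split; first by right.
  move=> j; lia.
rewrite maxn0; split; first lia.
split => // j Hj.
have [->|ne] := eqVneq j N.+1; first by rewrite PN.
apply: HM3; lia.
Qed.

Lemma beta_props n lam h : is_npartition n lam -> 1 <= h <= dd lam ->
  [/\ 1 <= beta n lam h <= lam1 lam, collen lam (beta n lam h) = zeta n lam h &
      forall j', beta n lam h < j' <= lam1 lam -> collen lam j' != zeta n lam h].
Proof.
move=> P Hh.
have ze := zeta_eq n Hh.
have Hs : h.-1 < size (zetas lam) by rewrite /dd in Hh; lia.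
have zin : zeta n lam h \in zetas lam by have := mem_nth 0 Hs; rewrite -ze.
have [j0 [Hj0 Ej0]] := zetas_mem zin.
rewrite /beta ifF; last by apply/negbTE/negP; lia.
have [H1 [H2 H3]] := bigmax_nat (fun j => collen lam j == zeta n lam h) (lam1 lam).
set M := \max_(1 <= j < (lam1 lam).+1 | _) j in H1 H2 H3 *.
case: H2 => [M0|[HM PM]].
  by exfalso; have := H3 j0 ltac:(lia); rewrite /= Ej0 eqxx.
by split => //; [lia | apply/eqP].
Qed.

Lemma mono_weak lo lo' hi pi : lo <= lo' -> mono lo hi pi -> mono lo' hi pi.
Proof. by move=> H Hm k Hk1 Hk2; apply: Hm => //; lia. Qed.

Lemma bundle n lam T h : 0 < n -> is_npartition n lam -> semistandard n lam T ->
  1 <= h <= (dd lam).+1 ->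
  [/\ 1 <= beta n lam h <= lam1 lam, zeta n lam h <= n, zeta n lam h.-1 <= n,
      mono (zeta n lam h.-1) (zeta n lam h) (stc n lam T (beta n lam h)) &
      forall j', beta n lam h < j' <= lam1 lam -> collen lam j' <= zeta n lam h.-1].
Proof.
move=> Hn P S /andP [Hh1 Hh2].
have L1 := lam1_pos P.
have dpos : 0 < dd lam.
  by have := mem_zetas (ltac:(lia) : 1 <= 1 <= lam1 lam); rewrite /dd; case: (zetas lam).
have [Ed|Nd] := eqVneq h (dd lam).+1.
  have Eb : beta n lam h = 1 by rewrite /beta Ed eqxx.
  have Ez : zeta n lam h = n by rewrite /zeta Ed /= eqxx.
  have Ezl : zeta n lam h.-1 = nth 0 (zetas lam) (dd lam).-1.
    by rewrite Ed /= zeta_eq //; lia.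
  have Hlast x : x \in zetas lam -> x <= nth 0 (zetas lam) (dd lam).-1.
    move=> xin.
    have Hix : index x (zetas lam) < size (zetas lam) by rewrite index_mem.
    have := @zetas_mono lam (index x (zetas lam)) (dd lam).-1 ltac:(rewrite /dd in dpos *; lia) ltac:(rewrite /dd in dpos *; lia).
    by rewrite nth_index.
  rewrite Eb Ez Ezl; split => //.
  - apply: zetas_le_n P _; apply: mem_nth; rewrite -/(dd lam); lia.
  - rewrite stc1; case: (pi11_props P S) => _ _ Hm.
    apply: mono_weak Hm; apply: Hlast; apply: mem_zetas; lia.
  - move=> j' Hj'; apply: Hlast; apply: mem_zetas; lia.
have Hh : 1 <= h <= dd lam by lia.
have [Hb Ecb Hne] := beta_props P Hh.
set b := beta n lam h in Hb Ecb Hne *.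
have Hs : h.-1 < size (zetas lam) by rewrite /dd in Hh; lia.
have Hhi : zeta n lam h <= n by rewrite -Ecb; apply: collen_le_n P.
have Hlo : zeta n lam h.-1 <= n.
  have [->|/eqP h1] := eqVneq h 1; first by [].
  rewrite zeta_eq; last lia.
  apply: zetas_le_n P _; apply: mem_nth; exact: leq_ltn_trans (leq_pred _) Hs.
split => //.
- have [_ Hinv] := stc_inv P S Hb.
  move=> k Hk1 Hk2; rewrite !Hinv; try lia.
  apply: (@diag_col_lt n lam T b k k.+1 S) => //; try lia.
  by apply: diag_intro; lia.
- move=> j' Hj'.
  have Hc : collen lam j' <= collen lam b by apply: collen_anti; lia.
  have Hn' := Hne j' Hj'.
  have Hlt : collen lam j' < nth 0 (zetas lam) h.-1.
    by rewrite -(@zeta_eq n lam h) // -Ecb ltn_neqAle Hc andbT; rewrite Ecb.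
  have xin : collen lam j' \in zetas lam by apply: mem_zetas; lia.
  have Hi := zetas_index xin Hs Hlt.
  have [E1|/eqP h1] := eqVneq h 1; first by rewrite E1 in Hi.
  rewrite zeta_eq; last lia.
  have := @zetas_mono lam (index (collen lam j') (zetas lam)) h.-2 ltac:(lia) ltac:(lia).
  by rewrite nth_index.
Qed.

Theorem lemma4p1 (n : nat) (lam : seq nat) (T : nat -> nat -> nat) (h : nat) :
  0 < n -> is_npartition n lam -> semistandard n lam T ->
  1 <= h <= (dd lam).+1 ->
  forall j i, pi_defined lam j i -> read_le (beta n lam h, 1) (j, i) ->
  forall k, zeta n lam h.-1 + 1 <= k -> k < zeta n lam h ->
    pent (pi_at n lam T j i) k < pent (pi_at n lam T j i) k.+1.
Proof.
move=> Hn P S Hh j i Hdef Hle k Hk1 Hk2.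
have [Hb Hhi Hlo Hbase Hcols] := bundle Hn P S Hh.
set b := beta n lam h in Hb Hbase Hcols Hle.
set lo := zeta n lam h.-1 in Hlo Hbase Hcols Hk1.
set hi := zeta n lam h in Hhi Hbase Hk2.
suff : mono lo hi (pi_at n lam T j i) by move=> /(_ k Hk1 Hk2).
have stc_pres : forall m, b + m <= lam1 lam ->
    perm_eq (stc n lam T (b + m)) (iota 1 n) /\ mono lo hi (stc n lam T (b + m)).
  elim=> [|m IH] Hm.
    by rewrite addn0; split => //; case: (stc_inv P S Hb).
  have [Hp Hmo] := IH ltac:(lia).
  rewrite addnS stcS; last lia.
  apply: foldl_pres => //.
  by move=> x /mem_col [-> Hx]; split => //; apply: Hcols; lia.
rewrite /read_le /= in Hle.
case/orP: Hdef => [/eqP [Ej Ei] | /andP [Hj2 Dji]].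
  subst j i.
  have Eb : b = 1 by case/orP: Hle => [H|/andP [/eqP H _]]; lia.
  by rewrite /pi_at eqxx -stc1 -Eb.
move: (Dji); rewrite /in_diagram => /and4P [_ Hjl Hi1 Hic].
rewrite pi_at_col; [|lia|lia].
case/orP: Hle => [Hbj | /andP [/eqP Ebj Hi]].
  have [Hp Hmo] := stc_pres (j.-1 - b) ltac:(lia).
  rewrite (_ : b + (j.-1 - b) = j.-1) in Hp Hmo; last lia.
  apply: (proj2 (@foldl_pres n lam T lo hi _ _ Hhi _ Hlo Hp Hmo)).
  move=> x /mem_take /mem_col [-> Hx]; split => //; apply: Hcols; lia.
have Ei : i = 1 by lia.
rewrite Ei take_oversize ?size_col; last lia.
have := @stcS n lam T j.-1 ltac:(lia); rewrite prednK; last lia.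
by move=> <-; rewrite -Ebj.
Qed.
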